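(* Let $v\equiv 1$ or $7\pmod{24}$ and $n=\frac{v-1}{6}$. If a cyclic four-fold triple system CTS$(v,4)$ has fine structure $(c_1,c_2,c_3,c_4)$ with $c_2=t$, $c_3=s$, $c_4=u$, then $0\le u\le n$, $0\le s\le n-u$ and $0\le t\le 2n-2u-2s$.
   Context: A cyclic $\lambda$-fold triple system CTS$(v,\lambda)$ is a multiset $\mathcal B$ of 3-element subsets (blocks) of $\mathbb Z_v$ such that every 2-element subset of $\mathbb Z_v$ is contained in exactly $\lambda$ blocks (counted with multiplicity), and $\mathcal B$ is invariant under the translation $x\mapsto x+1$. Thus $\mathcal B$ is a union of translation orbits of 3-subsets with multiplicities; a base block is an orbit representative. The fine structure is $(c_1,\ldots,c_\lambda)$, where $c_i$ is the number of distinct base blocks (orbits) occurring with multiplicity exactly $i$. *)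

(* Defs.v *)
From mathcomp Require Import all_boot.
Set Implicit Arguments. Unset Strict Implicit. Unset Printing Implicit Defensive.

(* Points are 'I_v, viewed as Z_v (addition mod v); translation x |-> x+1 is ordS. *)
(* A multiset of 3-subsets is given by its multiplicity function m. *)

Definition translate (v : nat) (B : {set 'I_v}) : {set 'I_v} := [set ordS x | x in B].

Definition tr_orbit (v : nat) (B : {set 'I_v}) : {set {set 'I_v}} :=
  [set iter k (@translate v) B | k : 'I_v].

Definition is_CTS (v lambda : nat) (m : {set 'I_v} -> nat) : Prop :=
  [/\ (forall B, 0 < m B -> #|B| = 3),
      (forall B, m (translate B) = m B) &
      (forall P : {set 'I_v}, #|P| = 2 ->
         \sum_(B : {set 'I_v} | P \subset B) m B = lambda)].

Definition fine_c (v : nat) (m : {set 'I_v} -> nat) (i : nat) : nat :=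
  #|[set tr_orbit B | B in [set B : {set 'I_v} | (#|B| == 3) && (m B == i)]]|.
Arguments is_CTS v lambda m : clear implicits.
Arguments fine_c v m i : clear implicits.

(* Main.v *)
Require Import Defs.
From mathcomp Require Import all_boot.
From mathcomp Require Import zify.
Set Implicit Arguments. Unset Strict Implicit. Unset Printing Implicit Defensive.

Section Orb.
Variable v : nat.
Hypothesis v_gt0 : 0 < v.
Local Notation T := 'I_v.

Definition sh (k : nat) (x : T) : T := iter k (@ordS v) x.

Lemma val_sh k x : val (sh k x) = (x + k) %% v.
Proof.
elim: k => [|k IH]; first by rewrite addn0 modn_small.
rewrite /sh iterS /= -/(sh k x) IH addnS -addn1 modnDml addn1.
by [].
Qed.

Lemma sh_inj k : injective (sh k).
Proof. by elim: k => [|k IH] x y //= /ordS_inj /IH. Qed.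

Lemma iter_tr k (B : {set T}) : iter k (@translate v) B = [set sh k x | x in B].
Proof.
elim: k => [|k IH]; first by rewrite imset_id.
by rewrite iterS IH /translate -imset_comp.
Qed.

Lemma sh_mod k1 k2 x : k1 = k2 %[mod v] -> sh k1 x = sh k2 x.
Proof.
move=> e; apply: val_inj; rewrite !val_sh.
by rewrite -modnDmr e modnDmr.
Qed.

Lemma iter_tr_mod k1 k2 B : k1 = k2 %[mod v] ->
  iter k1 (@translate v) B = iter k2 (@translate v) B.
Proof. by move=> e; rewrite !iter_tr; apply: eq_imset => x; apply: sh_mod. Qed.

Lemma card_tr k B : #|iter k (@translate v) B| = #|B|.
Proof. by rewrite iter_tr card_imset //; apply: sh_inj. Qed.

Lemma tr_orbit_iter j B : tr_orbit (iter j (@translate v) B) = tr_orbit B.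
Proof.
apply/setP => C; apply/imsetP/imsetP => [[k _ ->]|[k _ ->]].
  exists (Ordinal (ltn_pmod (k + j) v_gt0)) => //.
  by rewrite -iterD; apply: iter_tr_mod; rewrite /= modn_mod.
exists (Ordinal (ltn_pmod (k + (v - j %% v)) v_gt0)) => //.
rewrite -iterD; apply: iter_tr_mod => /=.
rewrite modnDml -addnA.
have hj := ltn_pmod j v_gt0.
have -> : v - j %% v + j = v * (j %/ v).+1.
  rewrite {2}(divn_eq j v) addnC -addnA (addnC (j %% v)) subnK ?(ltnW hj) //.
  by rewrite mulnS addnC mulnC.
by rewrite -modnDmr modnMr addn0 modn_small.
Qed.
End Orb.

Section Orb2.
Variable v : nat.
Hypothesis v_gt0 : 0 < v.
Hypothesis cop6 : coprime v 6.
Local Notation T := 'I_v.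

Lemma iter_tr_fix d e (C : {set T}) : iter d (@translate v) C = C ->
  iter (e * d) (@translate v) C = C.
Proof. by move=> h; elim: e => [|e IH] //; rewrite mulSn iterD IH h. Qed.

Lemma no_period d (C : {set T}) : #|C| = 3 -> 0 < d < v ->
  iter d (@translate v) C = C -> False.
Proof.
move=> c3 /andP[d0 dv] hC.
have : 0 < #|C| by rewrite c3.
rewrite card_gt0 => /set0Pn [x xC].
pose f (e : 'I_4) := sh (e * d) x.
have fC e : f e \in C.
  by rewrite -(iter_tr_fix e hC) iter_tr; apply: imset_f.
have neq (a b : 'I_4) : a < b -> f a != f b.
  move=> ab; apply/negP => /eqP /(congr1 val); rewrite !val_sh => /eqP.
  rewrite eqn_modDl eq_sym eqn_mod_dvd; last by rewrite leq_mul2r ltnW ?orbT.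
  rewrite -mulnBl Gauss_dvdr.
    by move=> /(dvdn_leq d0); rewrite leqNgt dv.
  apply: (coprime_dvdr _ cop6).
  case: a b ab => [[|[|[|[|a]]]] ?] [[|[|[|[|b]]]] ?] //=.
have finj : injective f.
  move=> a b e; case: (ltngtP a b) => [ab|ba|/val_inj //].
    by move: (neq _ _ ab); rewrite e eqxx.
  by move: (neq _ _ ba); rewrite e eqxx.
have : #|f @: 'I_4| <= #|C|.
  by apply: subset_leq_card; apply/subsetP => y /imsetP [e _ ->].
by rewrite card_imset // card_ord c3.
Qed.

Lemma card_orbit (B : {set T}) : #|B| = 3 -> #|tr_orbit B| = v.
Proof.
move=> b3; rewrite /tr_orbit card_imset ?card_ord //.
have key (j k : 'I_v) : j < k -> iter j (@translate v) B != iter k (@translate v) B.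
  move=> jk; apply/negP => /eqP e.
  apply: (@no_period (k - j) (iter j (@translate v) B)).
  - by rewrite card_tr.
  - by rewrite subn_gt0 jk /= (leq_ltn_trans (leq_subr _ _)).
  by rewrite -iterD subnK ?(ltnW jk).
move=> j k e; case: (ltngtP j k) => [jk|kj|/val_inj //].
  by move: (key _ _ jk); rewrite e eqxx.
by move: (key _ _ kj); rewrite e eqxx.
Qed.
End Orb2.

Section Cnt.
Variable v : nat.
Hypothesis v_gt0 : 0 < v.
Hypothesis cop6 : coprime v 6.
Local Notation T := 'I_v.
Variable m : {set T} -> nat.
Hypothesis minv : forall B, m (translate B) = m B.

Lemma m_iter k B : m (iter k (@translate v) B) = m B.
Proof. by elim: k => [|k IH] //=; rewrite minv. Qed.

Lemma fine_le i : v * fine_c v m i <=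
   #|[set B : {set T} | (#|B| == 3) && (m B == i)]|.
Proof.
set S := [set B : {set T} | _].
rewrite /fine_c -/S -[X in _ <= X]sum1_card (partition_big_imset (@tr_orbit v)) /=.
rewrite mulnC -sum_nat_const; apply: leq_sum => O /imsetP [B0 B0S ->].
move: B0S; rewrite inE => /andP [/eqP b3 /eqP mb].
have -> : \sum_(i0 in S | tr_orbit i0 == tr_orbit B0) 1 =
   #|[set B | (B \in S) && (tr_orbit B == tr_orbit B0)]|.
  by rewrite -sum1_card; apply: eq_bigl => B; rewrite inE.
rewrite -{1}(card_orbit cop6 b3); apply: subset_leq_card.
apply/subsetP => C /imsetP [k _ ->]; rewrite !inE card_tr m_iter b3 mb !eqxx /=.
by rewrite tr_orbit_iter.
Qed.
End Cnt.

Definition w k := if k == 2 then 2 else if k == 3 then 4 else if k == 4 then 4 else 0.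
Definition h k := if k == 2 then 2 else if 3 <= k then 4 else 0.

Lemma wsum (I : finType) (P : pred I) (F : I -> nat) :
  \sum_(i | P i) F i = 4 -> \sum_(i | P i) w (F i) <= 4.
Proof.
move=> e.
have : \sum_(i | P i) F i <= 4 -> \sum_(i | P i) w (F i) <= h (\sum_(i | P i) F i).
  apply: (big_rec2 (fun y1 y2 => y1 <= 4 -> y2 <= h y1)) => // i y1 y2 _ K.
  move=> le4; move: (K (leq_trans (leq_addl _ _) le4)) => {K}.
  move: le4; rewrite /w /h.
  case: (F i) => [|[|[|[|[|a]]]]]; case: y1 => [|[|[|[|[|b]]]]] //=; lia.
by rewrite e => /(_ (leqnn 4)).
Qed.

Section DC.
Variable v : nat.
Local Notation T := 'I_v.
Variable m : {set T} -> nat.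

Definition W (B : {set T}) := if #|B| == 3 then w (m B) else 0.

Lemma cnt3 (B : {set T}) : #|B| = 3 ->
  3 <= #|[set P : {set T} | (#|P| == 2) && (P \subset B)]|.
Proof.
move=> b3; have : 2 < #|B| by rewrite b3.
case/card_gt2P => x [y [z [[xB yB zB] [xy yz zx]]]].
apply/card_gt2P; exists [set x; y], [set y; z], [set z; x].
have sub2 a b : a \in B -> b \in B -> a != b -> [set a; b] \in
    [set P : {set T} | (#|P| == 2) && (P \subset B)].
  move=> aB bB ab; rewrite inE cards2 ab /=.
  by apply/subsetP => c; rewrite !inE => /orP [] /eqP ->.
split; first by split; apply: sub2.
split.
- apply/negP => /eqP /setP /(_ x); rewrite !inE eqxx /= => /esym /orP [] /eqP e.
    by move: xy; rewrite e eqxx.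
  by move: zx; rewrite e eqxx.
- apply/negP => /eqP /setP /(_ y); rewrite !inE eqxx /= => /esym /orP [] /eqP e.
    by move: yz; rewrite e eqxx.
  by move: xy; rewrite e eqxx.
- apply/negP => /eqP /setP /(_ z); rewrite !inE eqxx /= ?orbT => /esym /orP [] /eqP e.
    by move: zx; rewrite e eqxx.
  by move: yz; rewrite e eqxx.
Qed.

Lemma double_count :
  (forall P : {set T}, #|P| = 2 -> \sum_(B : {set T} | P \subset B) m B = 4) ->
  3 * \sum_(B : {set T}) W B <= 4 * 'C(v, 2).
Proof.
move=> hP.
have e1 : \sum_(P : {set T} | #|P| == 2) \sum_(B : {set T} | P \subset B) W B =
    \sum_(B : {set T}) (#|[set P : {set T} | (#|P| == 2) && (P \subset B)]| * W B).
  under eq_bigr do rewrite big_mkcond.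
  rewrite exchange_big /=; apply: eq_bigr => B _.
  rewrite -sum_nat_const -big_mkcondr /=; apply: eq_bigl => P; by rewrite inE.
have le1 : \sum_(P : {set T} | #|P| == 2) \sum_(B : {set T} | P \subset B) W B
    <= 4 * 'C(v, 2).
  have -> : 'C(v, 2) = #|[set P : {set T} | #|P| == 2]| by rewrite card_draws card_ord.
  rewrite mulnC -sum_nat_const.
  rewrite [X in _ <= X](eq_bigl (fun P : {set T} => #|P| == 2)); last by move=> P; rewrite inE.
  apply: leq_sum => P /eqP p2.
  apply: leq_trans (wsum (hP P p2)).
  by apply: leq_sum => B _; rewrite /W; case: ifP.
apply: leq_trans le1; rewrite e1 big_distrr /=; apply: leq_sum => B _.
rewrite /W; case: ifP => [/eqP b3|]; last by rewrite muln0.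
by rewrite leq_mul2r cnt3 ?orbT.
Qed.
End DC.
Unset Implicit Arguments.

Theorem mainTheorem12 (v : nat) (m : {set 'I_v} -> nat) :
  (v %% 24 = 1 \/ v %% 24 = 7) ->
  is_CTS v 4 m ->
  let n := (v - 1) %/ 6 in
  let t := fine_c v m 2 in
  let s := fine_c v m 3 in
  let u := fine_c v m 4 in
  [/\ 0 <= u <= n, 0 <= s <= n - u & 0 <= t <= 2 * n - 2 * u - 2 * s].
Proof.
move=> hv [_ minv hP] n t s u.
have [v6 v0] : v - 1 = 6 * n /\ 0 < v by rewrite /n; lia.
have cop6 : coprime v 6.
  have e : v %% 6 = 1 by lia.
  by rewrite /coprime -gcdn_modl e.
set S := fun i => [set B : {set 'I_v} | (#|B| == 3) && (m B == i)].
have ft := fine_le v0 cop6 minv 2.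
have fs := fine_le v0 cop6 minv 3.
have fu := fine_le v0 cop6 minv 4.
have dc := double_count hP.
have eW : \sum_(B : {set 'I_v}) W m B =
   2 * #|S 2| + 4 * #|S 3| + 4 * #|S 4|.
  have cardE (A : {set {set 'I_v}}) : #|A| = \sum_(B : {set 'I_v}) (B \in A : nat).
    by rewrite -sum1_card big_mkcond; apply: eq_bigr => B _; case: (B \in A).
  rewrite !cardE !big_distrr -!big_split /=; apply: eq_bigr => B _.
  rewrite /W !inE; case: (#|B| == 3) => //=.
  by rewrite /w; case: (m B) => [|[|[|[|[|k]]]]].
have bC : 'C(v, 2) = 3 * v * n.
  rewrite bin2.
  have -> : v * v.-1 = (3 * v * n).*2 by rewrite -subn1 v6 -muln2; lia.
  by rewrite doubleK.
rewrite eW bC in dc.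
move: dc ft fs fu.
rewrite -/(S 2) -/(S 3) -/(S 4).
move: #|S 2| #|S 3| #|S 4| => N2 N3 N4 dc ft fs fu.
have key : v * (t + 2 * s + 2 * u) <= v * (2 * n).
  rewrite !mulnDr muln0 !addn0; rewrite -!mulnA in dc.
  rewrite -/t in ft; rewrite -/s in fs; rewrite -/u in fu.
  move: (v * t) (v * s) (v * u) (v * n) ft fs fu dc => a b c d.
  lia.
rewrite leq_pmul2l // in key.
move: key; clearbody n t s u; move=> key; split; apply/andP; split; lia.
Qed.
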